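(* Let $A$ be a brick gentle algebra. For any $\widetilde{\mathfrak T}\in\mathrm{torshad}(\Pi(A))$, the set of strings $B(\widetilde{\mathfrak T})$ is a biclosed set.
   Context: Setting: $k$ a field, $A=kQ/I$, $Q$ finite connected quiver, $I$ admissible generated by paths (paths composed right to left). Gentle: (S1) each vertex has at most two incoming and two outgoing arrows; (S2) for each arrow $\alpha$ at most one $\beta$ with $\alpha\beta$ a path not in $I$ and at most one $\gamma$ with $\gamma\alpha$ a path not in $I$; (G1) $I$ generated by paths of length two; (G2) for each arrow $\alpha$ at most one $\beta$ with $\alpha\beta$ a path in $I$ and at most one $\gamma$ with $\gamma\alpha$ a path in $I$. Brick gentle: moreover every indecomposable module has endomorphism ring a division ring. Strings (for any $k\Gamma/J$, $J$ generated by paths): words $w=\gamma_d^{\epsilon_d}\cdots\gamma_1^{\epsilon_1}$ in arrows and formal inverses ($s(\gamma^{-1})=t(\gamma)$, $t(\gamma^{-1})=s(\gamma)$), consecutive letters composable, no $\gamma\gamma^{-1}$ or $\gamma^{-1}\gamma$, neither $w$ nor $w^{-1}$ containing a subword which is a path in $J$; plus length-zero strings; $w\sim w^{-1}$. String module $M(w)$: basis $b_1,\dots,b_{d+1}$, $b_j$ at vertex $x_j$ ($x_1=s(\gamma_1^{\epsilon_1})$, $x_{i+1}=t(\gamma_i^{\epsilon_i})$); $\gamma_i$ sends $b_i\mapsto b_{i+1}$ if $\epsilon_i=1$, $b_{i+1}\mapsto b_i$ if $\epsilon_i=-1$, other actions zero. A concatenation of $u,v\in\mathrm{Str}(A)$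 is a string $v\gamma^{\pm1}u$, $\gamma\in Q_1$; $X\subseteq\mathrm{Str}(A)$ is closed if it contains all concatenations of its elements, biclosed if $X$ and its complement are closed. For $w$ of length $d$, $w=w_1\gamma_j^{\epsilon_j}w_2$ ($1\le j\le d$) gives a break $\{w_1,w_2\}$ with splits $w_1,w_2$. Labels $\mathcal S$: pairs $w_{\mathcal D}=(w,\mathcal D)$, $\mathcal D$ a set of $d$ splits of $w$ no two in the same break, modulo $(w,\mathcal D)\sim(w^{-1},\mathcal D^{-1})$. $\Pi(A)=k\overline Q/\overline I$: $\overline Q$ adds $\gamma^*:t(\gamma)\to s(\gamma)$ for each $\gamma\in Q_1$; $\overline I$ generated by $\beta\alpha,\alpha^*\beta^*$ for paths $\beta\alpha\in I$ of length two. A string of $\Pi(A)$ specializes to the word obtained by replacing $\gamma^*$ by $\gamma^{-1}$ and $(\gamma^* )^{-1}$ by $\gamma$. $\mathcal M$ is the additive closure of all $M(\widetilde w)$ with $\widetilde w$ a string of $\Pi(A)$ specializing to a string of $A$. The map $\mathrm{str}$: for $w_{\mathcal D}$, $w=\gamma_d^{\epsilon_d}\cdots\gamma_1^{\epsilon_1}$, replace the $i$-th letter by $\gamma_i$ if $w=u\gamma_iw'$ with $w'\in\mathcal D$; $\gamma_i^*$ if $w=u\gamma_i^{-1}w'$ with $w'\in\mathcal D$; $\gamma_i^{-1}$ if $w=w'\gamma_i^{-1}u$ with $w'\in\mathcal D$; $(\gamma_i^* )^{-1}$ if $w=w'\gamma_iu$ with $w'\in\mathcal D$ ($u$ possibly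 empty); $\mathrm{str}$ is a bijection from $\mathcal S$ onto the strings of $\Pi(A)$ specializing to strings of $A$. $\mathrm{torshad}(\Pi(A))$ is the set of all $\mathcal T\cap\mathcal M$ with $\mathcal T$ a torsion class (closed under quotients and extensions) of $\mathrm{mod}(\Pi(A))$. For $\widetilde{\mathfrak T}\in\mathrm{torshad}(\Pi(A))$, $B(\widetilde{\mathfrak T}):=\{w\in\mathrm{Str}(A)\mid M(\mathrm{str}(w_{\mathcal D}))\in\widetilde{\mathfrak T}\text{ for some }\mathcal D\}$. *)

(* Defs.v *)
From HB Require Import structures.
From mathcomp Require Import all_boot all_order all_algebra.
Set Implicit Arguments. Unset Strict Implicit. Unset Printing Implicit Defensive.
Import GRing.Theory.
Local Open Scope ring_scope.

(* A finite-dimensional (left) module over k Q / I, given by its underlying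
   space k^qdim (row vectors, acting on the right: v |-> v *m _), the action
   of the vertex idempotents e_x and of the arrows. *)
Record qmod (k : fieldType) (V E : Type) := QMod {
  qdim : nat;
  qidem : V -> 'M[k]_qdim;
  qact : E -> 'M[k]_qdim }.

Section BoundQuiver.
Variables (k : fieldType) (V E : finType) (src tgt : E -> V).
(* rel a b  <=>  the length-two path  b a  (first a, then b) lies in I;
   I is the ideal generated by these length-two paths (condition (G1)). *)
Variable rel : E -> E -> bool.

(* a path is a sequence of arrows listed in the order they are traversed:
   [:: a1; ...; an] is the path an ... a1 *)
Definition is_arrow_path (p : seq E) : bool :=
  sorted (fun a b => tgt a == src b) p.
Definition path_in_ideal (p : seq E) : Prop :=
  exists a b, infix [:: a; b] p /\ rel a b.

Definition connected_quiver : Prop :=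
  forall x y : V,
    connect (fun a b => [exists e, ((src e == a) && (tgt e == b))
                                || ((src e == b) && (tgt e == a))]) x y.

Definition admissible_monomial : Prop :=
  (forall a b, rel a b -> tgt a = src b) /\
  exists N : nat, forall p : seq E,
    size p = N -> is_arrow_path p -> path_in_ideal p.

Definition gentle : Prop :=
  [/\ connected_quiver, admissible_monomial,
      forall x : V, (#|[pred a | src a == x]| <= 2)%N /\ (#|[pred a | tgt a == x]| <= 2)%N,
      forall al : E,
        (#|[pred be | (tgt be == src al) && ~~ rel be al]| <= 1)%N /\
        (#|[pred ga | (src ga == tgt al) && ~~ rel al ga]| <= 1)%N
    &
      forall al : E,
        (#|[pred be | rel be al]| <= 1)%N /\ (#|[pred ga | rel al ga]| <= 1)%N].

Definition is_module (M : qmod k V E) : Prop :=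
  [/\ forall x, qidem M x *m qidem M x = qidem M x,
      forall x y, x != y -> qidem M x *m qidem M y = 0,
      \sum_(x : V) qidem M x = 1%:M,
      forall a, qact M a = qidem M (src a) *m qact M a *m qidem M (tgt a)
    & forall a b, rel a b -> qact M a *m qact M b = 0].

Definition is_hom (M N : qmod k V E) (f : 'M[k]_(qdim M, qdim N)) : Prop :=
  (forall x, qidem M x *m f = f *m qidem N x) /\
  (forall a, qact M a *m f = f *m qact N a).

Definition isomorphic (M N : qmod k V E) : Prop :=
  exists f : 'M[k]_(qdim M, qdim N), [/\ is_hom f, row_free f & row_full f].

Definition indecomposable (M : qmod k V E) : Prop :=
  (0 < qdim M)%N /\
  forall e : 'M[k]_(qdim M), is_hom e -> e *m e = e -> e = 0 \/ e = 1%:M.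

Definition end_division (M : qmod k V E) : Prop :=
  forall f : 'M[k]_(qdim M), is_hom f -> f != 0 -> f \in unitmx.

Definition brick_gentle : Prop :=
  gentle /\ forall M : qmod k V E, is_module M -> indecomposable M -> end_division M.

Definition torsion_class (T : qmod k V E -> Prop) : Prop :=
  [/\ forall M, T M -> is_module M,
      forall M N (f : 'M[k]_(qdim M, qdim N)),
        is_module M -> is_module N -> T M -> is_hom f -> row_full f -> T N
    & forall X Y Z (f : 'M[k]_(qdim X, qdim Y)) (g : 'M[k]_(qdim Y, qdim Z)),
        is_module X -> is_module Y -> is_module Z -> T X -> T Z ->
        is_hom f -> is_hom g -> row_free f -> row_full g ->
        (f == kermx g)%MS -> T Y].

Definition dsum (M N : qmod k V E) : qmod k V E :=
  {| qdim := (qdim M + qdim N)%N;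
     qidem := fun x => block_mx (qidem M x) 0 0 (qidem N x);
     qact := fun a => block_mx (qact M a) 0 0 (qact N a) |}.

Definition zero_mod : qmod k V E :=
  {| qdim := 0%N; qidem := fun _ => 0; qact := fun _ => 0 |}.

(* a letter (g, true) is the arrow g, (g, false) is its formal inverse g^-1 *)
Definition lsrc (l : E * bool) : V := if l.2 then src l.1 else tgt l.1.
Definition ltgt (l : E * bool) : V := if l.2 then tgt l.1 else src l.1.
Definition linv (l : E * bool) : E * bool := (l.1, ~~ l.2).

(* a word is (x, [:: l1; ...; ld]) standing for l_d ... l_1 starting at x
   (x matters only for d = 0, where it is the length-zero string e_x) *)
Fixpoint walk (x : V) (w : seq (E * bool)) : bool :=
  if w is l :: w' then (lsrc l == x) && walk (ltgt l) w' else true.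

Definition wend (x : V) (w : seq (E * bool)) : V := last x (map ltgt w).

Definition no_ideal_subword (w : seq (E * bool)) : Prop :=
  forall u, infix u w -> all (fun l => l.2) u -> ~ path_in_ideal (map fst u).

Definition is_string (xw : V * seq (E * bool)) : Prop :=
  [/\ walk xw.1 xw.2,
      sorted (fun l l' => l' != linv l) xw.2,
      no_ideal_subword xw.2
    & no_ideal_subword (rev (map linv xw.2))].

(* string module M(w): basis b_1..b_{d+1} (indices 0..d), b_j at x_j *)
Definition string_verts (x : V) (w : seq (E * bool)) : seq V := x :: map ltgt w.

Definition string_module (xw : V * seq (E * bool)) : qmod k V E :=
  {| qdim := (size xw.2).+1;
     qidem := fun y => \matrix_(p, q)
        ((p == q :> nat) && (nth None (map Some (string_verts xw.1 xw.2)) p == Some y))%:R;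
     qact := fun a => \matrix_(p, q)
        ((((q == p.+1 :> nat) && (nth None (map Some xw.2) p == Some (a, true)))
       || ((p == q.+1 :> nat) && (nth None (map Some xw.2) q == Some (a, false)))))%:R |}.

(* concatenation  v l u  of strings u and v via a letter l = g^{+-1} *)
Definition concat (u : V * seq (E * bool)) (l : E * bool) (v : V * seq (E * bool)) :=
  (u.1, u.2 ++ l :: v.2).

Definition closed_set (X : V * seq (E * bool) -> Prop) : Prop :=
  forall u v l, X u -> X v -> lsrc l = wend u.1 u.2 -> ltgt l = v.1 ->
    is_string (concat u l v) -> X (concat u l v).

Definition biclosed (X : V * seq (E * bool) -> Prop) : Prop :=
  closed_set X /\ closed_set (fun w => is_string w /\ ~ X w).

End BoundQuiver.

Section Preproj.
Variables (k : fieldType) (V E : finType) (src tgt : E -> V) (rel : E -> E -> bool).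

(* the quiver Qbar: inl g = g, inr g = g-star : tgt g -> src g *)
Definition pi_src (a : E + E) : V := match a with inl g => src g | inr g => tgt g end.
Definition pi_tgt (a : E + E) : V := match a with inl g => tgt g | inr g => src g end.
(* Ibar generated by  b a  and  a-star b-star  for  b a in I *)
Definition pi_rel (a b : E + E) : bool :=
  match a, b with
  | inl a, inl b => rel a b
  | inr b', inr a' => rel a' b'
  | _, _ => false
  end.

(* specialization: g-star |-> g^-1, (g-star)^-1 |-> g *)
Definition spec_letter (l : (E + E)%type * bool) : E * bool :=
  match l.1 with inl g => (g, l.2) | inr g => (g, ~~ l.2) end.
Definition specialize_word (xw : V * seq ((E + E)%type * bool)) : V * seq (E * bool) :=
  (xw.1, map spec_letter xw.2).

(* the class  M  (additive closure of the string modules M(w~) with w~ a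
   string of Pi(A) specializing to a string of A) *)
Definition shadow_class (N : qmod k V (E + E)%type) : Prop :=
  exists (ws : seq (V * seq ((E + E)%type * bool))) (N' : qmod k V (E + E)%type),
    [/\ forall w, w \in ws ->
          is_string pi_src pi_tgt pi_rel w /\ is_string src tgt rel (specialize_word w),
        is_module pi_src pi_tgt pi_rel N'
      & isomorphic (dsum N N') (foldr (@dsum k V (E + E)%type) (zero_mod k V (E + E)%type)
                                     (map (string_module k pi_src pi_tgt) ws))].

(* labels: D = [:: c_1; ...; c_d], c_i = true iff the split at the i-th
   break chosen in D is the right factor w' (w = u g_i^{+-1} w'),
   c_i = false iff it is the left factor (w = w' g_i^{+-1} u). *)
Definition str_letter (l : E * bool) (c : bool) : (E + E)%type * bool :=
  (if c == l.2 then @inl E E l.1 else @inr E E l.1, c).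
Definition str (xw : V * seq (E * bool)) (D : seq bool) : V * seq ((E + E)%type * bool) :=
  (xw.1, [seq str_letter lc.1 lc.2 | lc <- zip xw.2 D]).

Definition torshad_elt (Tt : qmod k V (E + E)%type -> Prop) : Prop :=
  exists T, torsion_class pi_src pi_tgt pi_rel T /\
    forall N, Tt N <-> T N /\ shadow_class N.

Definition Bset (Tt : qmod k V (E + E)%type -> Prop) (xw : V * seq (E * bool)) : Prop :=
  is_string src tgt rel xw /\
  exists D : seq bool, size D = size xw.2 /\
    Tt (string_module k pi_src pi_tgt (str xw D)).

End Preproj.

(* Main.v *)
Require Import Defs.
From mathcomp Require Import all_boot all_order all_algebra.
From mathcomp Require Import zify.
Set Implicit Arguments. Unset Strict Implicit. Unset Printing Implicit Defensive.
Import GRing.Theory.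


Section S.
Variables (k : fieldType) (V E : finType) (src tgt : E -> V) (rel : E -> E -> bool).

Notation psrc := (@pi_src V E src tgt).
Notation ptgt := (@pi_tgt V E src tgt).
Notation prel := (@pi_rel E rel).
Notation spec := (@spec_letter E).
Notation PL := ((E + E)%type * bool)%type.

Lemma infix_map (T T' : eqType) (f : T -> T') s1 s2 :
  infix s1 s2 -> infix (map f s1) (map f s2).
Proof.
case/infixP => [s [s' ->]]; apply/infixP; exists (map f s), (map f s').
by rewrite !map_cat.
Qed.

Definition noideal2 (F : finType) (R : F -> F -> bool) (s : seq (F * bool)) :=
  forall a b, infix [:: (a, true); (b, true)] s -> ~~ R a b.

Lemma noideal2P (F : finType) (R : F -> F -> bool) s :
  no_ideal_subword R s <-> noideal2 R s.
Proof.
split.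
  move=> H a b Hi; apply/negP => Rab; apply: (H _ Hi) => //.
  by exists a, b; split => //; apply: infix_refl.
move=> H u Hu Hall [a [b [Hab Rab]]].
have eu : u = map (fun e => (e, true)) (map fst u).
  clear Hab Hu; elim: u Hall => //= [[e c] u IH] /andP[/= -> /IH <-] //.
have Hi : infix [:: (a, true); (b, true)] u.
  by rewrite eu; apply: (infix_map (fun e => (e, true)) Hab).
by move: (H a b (infix_trans Hi Hu)); rewrite Rab.
Qed.

Lemma spec_linv (l : PL) : spec (linv l) = linv (spec_letter l).
Proof. by case: l => [[g|g] b]. Qed.

Lemma linvK (F : finType) (l : F * bool) : linv (linv l) = l.
Proof. by case: l => g b; rewrite /linv /= negbK. Qed.

Lemma spec_lsrc (l : PL) : lsrc psrc ptgt l = lsrc src tgt (spec_letter l).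
Proof. by case: l => [[g|g] []]. Qed.

Lemma spec_ltgt (l : PL) : ltgt psrc ptgt l = ltgt src tgt (spec_letter l).
Proof. by case: l => [[g|g] []]. Qed.

Lemma pi_noideal (s : seq PL) :
  noideal2 rel (map spec s) ->
  noideal2 rel (rev (map (@linv _) (map spec s))) -> noideal2 prel s.
Proof.
move=> H1 H2 [a|a] [b|b] Hi //=.
  by apply: H1; have := infix_map spec Hi.
apply: H2; rewrite -[X in infix X _]/(rev [:: (a, true); (b, true)]) infix_rev.
by have := infix_map (@linv _) (infix_map spec Hi).
Qed.

Lemma walk_spec x (s : seq PL) :
  walk psrc ptgt x s = walk src tgt x (map spec s).
Proof. by elim: s x => //= l s IH x; rewrite spec_lsrc spec_ltgt IH. Qed.

Lemma map_spec_revinv (s : seq PL) :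
  map spec (rev (map (@linv _) s)) = rev (map (@linv _) (map spec s)).
Proof.
rewrite map_rev -!map_comp; congr rev; apply: eq_map => l /=.
by rewrite spec_linv.
Qed.

Lemma pi_string (w : V * seq PL) :
  is_string src tgt rel (specialize_word w) -> is_string psrc ptgt prel w.
Proof.
case: w => x s [/= Hw Hs H1 H2]; split => /=.
- by rewrite walk_spec.
- rewrite sorted_map in Hs; apply: sub_sorted Hs => l l' /=.
  by apply: contra => /eqP ->; rewrite spec_linv.
- by apply/noideal2P; apply: pi_noideal; apply/noideal2P.
- apply/noideal2P; apply: pi_noideal; apply/noideal2P.
    by rewrite map_spec_revinv.
  rewrite map_spec_revinv map_rev -map_comp revK.
  rewrite (eq_map (g := id)) ?map_id //.
  by move=> l /=; rewrite linvK.
Qed.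

Lemma spec_str_letter (l : E * bool) c : spec (str_letter l c) = l.
Proof. by case: l => g b; case: b; case: c. Qed.

Lemma ltgt_str (l : E * bool) c :
  ltgt psrc ptgt (str_letter l c) = ltgt src tgt l.
Proof. by rewrite spec_ltgt spec_str_letter. Qed.

Lemma spec_str (xw : V * seq (E * bool)) D :
  size xw.2 <= size D -> specialize_word (str xw D) = xw.
Proof.
case: xw => x s /= H; rewrite /specialize_word /str /=; congr (_, _).
elim: s D H => [|l s IH] [|c D] //= H.
by rewrite spec_str_letter IH.
Qed.

Lemma str_concat (u : V * seq (E * bool)) l v D1 c D2 :
  size D1 = size u.2 ->
  str (concat u l v) (D1 ++ c :: D2) =
  (u.1, (str u D1).2 ++ str_letter l c :: (str v D2).2).
Proof. by move=> h; rewrite /str /concat /= zip_cat // map_cat. Qed.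

End S.

Section M.
Variable k : fieldType.

Definition nmx m n (F : nat -> nat -> k) : 'M[k]_(m, n) := \matrix_(i < m, j < n) F i j.
Arguments nmx {m n} F.

Lemma nmxP m n (F G : nat -> nat -> k) :
  (forall i j, i < m -> j < n -> F i j = G i j) -> nmx F = nmx G :> 'M_(m, n).
Proof. by move=> H; apply/matrixP => i j; rewrite !mxE H. Qed.

Lemma mul_nmx m n p (F G : nat -> nat -> k) :
  (@nmx m n F *m @nmx n p G = nmx (fun i j => \sum_(q < n) F i q * G q j) :> 'M_(m, p))%R.
Proof.
by apply/matrixP => i j; rewrite !mxE; apply: eq_bigr => q _; rewrite !mxE.
Qed.

Lemma nmx0 m n : nmx (fun _ _ => 0%R) = 0%R :> 'M[k]_(m, n).
Proof. by apply/matrixP => i j; rewrite !mxE. Qed.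

Lemma nmx1 n : nmx (fun i j => (i == j)%:R%R) = 1%:M%R :> 'M[k]_n.
Proof. by apply/matrixP => i j; rewrite !mxE. Qed.

Lemma sum_ind_r n (F : nat -> k) b (t : nat) :
  (\sum_(q < n) F q * (b && (t == q :> nat))%:R%R = if (b && (t < n))%N then F t else 0)%R.
Proof.
case: b => /=; last by rewrite big1 // => q _; rewrite mulr0.
case: ifP => ht.
  rewrite (bigD1 (Ordinal ht)) //= eqxx mulr1 big1 ?addr0 // => q hq.
  case: eqP => [e|_]; last by rewrite mulr0.
  by case/eqP: hq; apply: val_inj; rewrite /= e.
rewrite big1 // => q _; case: eqP => [e|_]; last by rewrite mulr0.
by move: (ltn_ord q); rewrite -e ht.
Qed.

Lemma sum_ind_l n (F : nat -> k) b (t : nat) :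
  (\sum_(q < n) (b && (t == q :> nat))%:R%R * F q = if (b && (t < n))%N then F t else 0)%R.
Proof. by rewrite -(sum_ind_r n F b t); apply: eq_bigr => q _; rewrite mulrC. Qed.

Lemma eq_add_shift j q o : (j == q + o) = (o <= j) && (j - o == q).
Proof.
case: (leqP o j) => h /=; first by rewrite -{1}(subnK h) eqn_add2r eq_sym.
by apply/negbTE/eqP; lia.
Qed.

Definition emb m n o : 'M[k]_(m, n) := nmx (fun i j => (j == i + o)%:R%R).
Arguments emb {m n} o.
Definition prj m n o : 'M[k]_(m, n) := nmx (fun p j => (p == j + o)%:R%R).
Arguments prj {m n} o.

Lemma mul_emb_r r dS dB o (F : nat -> nat -> k) :
  (nmx F *m (@emb dS dB o) = nmx (fun i j => if ((o <= j) && (j - o < dS))%N then F i (j - o)%N else 0)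
    :> 'M_(r, dB))%R.
Proof.
rewrite mul_nmx; apply: nmxP => i j _ _.
by under eq_bigr => q _ do rewrite eq_add_shift; rewrite sum_ind_r.
Qed.

Lemma mul_emb_l dS dB p o (G : nat -> nat -> k) : o + dS <= dB ->
  ((@emb dS dB o) *m nmx G = nmx (fun i j => G (i + o)%N j) :> 'M_(dS, p))%R.
Proof.
move=> h; rewrite mul_nmx; apply: nmxP => i j hi _.
transitivity (\sum_(q < dB) (true && (i + o == q :> nat))%:R%R * G q j)%R.
  by apply: eq_bigr => q _; rewrite eq_sym.
by rewrite (sum_ind_l dB (fun q => G q j)) /= ifT //; lia.
Qed.

Lemma mul_prj_r r dB dS o (F : nat -> nat -> k) : o + dS <= dB ->
  (nmx F *m (@prj dB dS o) = nmx (fun p j => F p (j + o)%N) :> 'M_(r, dS))%R.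
Proof.
move=> h; rewrite mul_nmx; apply: nmxP => i j _ hj.
transitivity (\sum_(q < dB) F i q * (true && (j + o == q :> nat))%:R%R)%R.
  by apply: eq_bigr => q _; rewrite eq_sym.
by rewrite (sum_ind_r dB (fun q => F i q)) /= ifT //; lia.
Qed.

Lemma mul_prj_l dB dS p o (G : nat -> nat -> k) :
  ((@prj dB dS o) *m nmx G = nmx (fun i j => if ((o <= i) && (i - o < dS))%N then G (i - o)%N j else 0)
    :> 'M_(dB, p))%R.
Proof.
rewrite mul_nmx; apply: nmxP => i j _ _.
by under eq_bigr => q _ do rewrite eq_add_shift; rewrite (sum_ind_l dS (fun q => G q j)).
Qed.

Lemma emb_prj dS dB o : o + dS <= dB -> ((@emb dS dB o) *m (@prj dB dS o) = 1%:M)%R.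
Proof.
move=> h; rewrite /prj mul_emb_l // -nmx1; apply: nmxP => i j _ _.
by rewrite eqn_add2r.
Qed.

Lemma mul_diag_l n m (b : nat -> bool) (G : nat -> nat -> k) :
  (@nmx n n (fun p q => ((p == q) && b p)%:R%R) *m nmx G
   = nmx (fun p r => if b p then G p r else 0) :> 'M_(n, m))%R.
Proof.
rewrite mul_nmx; apply: nmxP => p r hp _.
under eq_bigr => q _ do rewrite andbC; by rewrite (sum_ind_l n (fun q => G q r)) hp andbT.
Qed.

Lemma mul_diag_r n m (b : nat -> bool) (F : nat -> nat -> k) :
  (@nmx m n F *m nmx (fun p q => ((p == q) && b p)%:R%R)
   = nmx (fun p r => if b r then F p r else 0) :> 'M_(m, n))%R.
Proof.
rewrite mul_nmx; apply: nmxP => p r _ hr.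
transitivity (\sum_(q < n) F p q * (b r && (r == q :> nat))%:R%R)%R.
  apply: eq_bigr => q _; congr (_ * _%:R)%R.
  case: eqP => [->|ne]; first by rewrite eqxx andbT.
  by case: eqP => [e|_]; [case: ne; rewrite e | rewrite andbF].
by rewrite (sum_ind_r n (fun q => F p q)) hr andbT.
Qed.

End M.
Arguments nmx {k m n} F.
Arguments emb {k m n} o.
Arguments prj {k m n} o.

Section SM.
Variables (k : fieldType) (V F : finType) (s t : F -> V) (R : F -> F -> bool).

Definition VVf x (w : seq (F * bool)) p := nth None (map Some (string_verts s t x w)) p.
Definition LLf (w : seq (F * bool)) p := nth None (map Some w) p.
Definition Abool w a p q :=
  ((q == p.+1) && (LLf w p == Some (a, true))) || ((p == q.+1) && (LLf w q == Some (a, false))).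

Notation SM := (string_module k s t).

Lemma idemE x w y : qidem (SM (x, w)) y =
  nmx (fun p q => ((p == q) && (VVf x w p == Some y))%:R%R).
Proof. by []. Qed.

Lemma actE x w a : qact (SM (x, w)) a = nmx (fun p q => (Abool w a p q)%:R%R).
Proof. by []. Qed.

Lemma walk_verts x w p l : walk s t x w -> LLf w p = Some l ->
  VVf x w p = Some (lsrc s t l) /\ VVf x w p.+1 = Some (ltgt s t l).
Proof.
elim: w x p => [|l0 w IH] x [|p] //=.
  by move=> /andP[/eqP <- _] [<-].
move=> /andP[_ hw] hl; exact: (IH _ _ hw hl).
Qed.

Lemma LLf_infix w p l1 l2 : LLf w p = Some l1 -> LLf w p.+1 = Some l2 ->
  infix [:: l1; l2] w.
Proof.
elim: w p => [|l w IH] [|p] //=.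
  move=> [<-]; case: w {IH} => //= l' w [<-].
  exact: (prefix_infix [:: l; l'] w).
move=> h1 h2; exact: (infix_catl [:: l] (IH _ h1 h2)).
Qed.

Lemma Abool_comp w a b p q r : noideal2 R w -> noideal2 R (rev (map (@linv _) w)) ->
  R a b -> Abool w a p q -> Abool w b q r -> False.
Proof.
move=> N1 N2 Rab.
case/orP => /andP[/eqP e1 /eqP h1]; case/orP => /andP[/eqP e2 /eqP h2].
- subst q r; by have := N1 _ _ (LLf_infix h1 h2); rewrite Rab.
- subst q; case: e2 => er; subst r; by rewrite h1 in h2.
- subst p r; by rewrite h1 in h2.
- subst p q; have Hi := infix_map (@linv _) (LLf_infix h2 h1).
  have := N2 a b; rewrite -[X in infix X _]/(rev [:: (b, true); (a, true)]) infix_rev.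
  by move/(_ Hi); rewrite Rab.
Qed.

Lemma VVf_some x w p : p <= size w -> exists z, VVf x w p = Some z.
Proof.
move=> hp; exists (nth x (string_verts s t x w) p).
rewrite /VVf (nth_map x) // /string_verts /= size_map; exact: hp.
Qed.

Lemma sm_module x w : is_string s t R (x, w) -> is_module s t R (SM (x, w)).
Proof.
case=> /= hw _ hn1 hn2; move/noideal2P: hn1 => N1; move/noideal2P: hn2 => N2.
split.
- move=> y; rewrite idemE (mul_diag_l _ _ (fun p => VVf x w p == Some y)).
  by apply: nmxP => p q _ _; case: (VVf x w p == Some y); rewrite ?andbF.
- move=> y z ne; rewrite !idemE (mul_diag_l _ _ (fun p => VVf x w p == Some y)) -nmx0.
  apply: nmxP => p q _ _; case: eqP => // ->.
  by rewrite inj_eq; [rewrite (negbTE ne) andbF | move=> ? ? []].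
- apply/matrixP => p q; rewrite summxE; under eq_bigr => y _ do rewrite mxE.
  rewrite mxE; have [e|ne] := eqVneq (p : nat) q.
    have epq : p = q by apply: val_inj.
    subst q; rewrite eqxx.
    have [z hz] : exists z, VVf x w p = Some z by apply: VVf_some; exact: (ltn_ord p).
    transitivity (\sum_y ((Some z == Some y))%:R : k)%R.
      apply: eq_bigr => y _; congr (_%:R)%R; rewrite andTb; congr (_ == _); exact: hz.
    rewrite (bigD1 z) //= eqxx big1 ?addr0 // => y hy.
    by rewrite inj_eq; [rewrite eq_sym (negbTE hy) | move=> ? ? []].
  have ne' : (p == q) = false by apply/negbTE; apply: contra ne => /eqP ->.
  by rewrite ne' big1 // => y _; rewrite (negbTE ne).
- move=> a; rewrite actE !idemE.
  rewrite (mul_diag_l _ _ (fun p => VVf x w p == Some (s a)) (fun p q => (Abool w a p q)%:R%R)).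
  rewrite (mul_diag_r _ _ (fun p => VVf x w p == Some (t a))
     (fun p r => if VVf x w p == Some (s a) then (Abool w a p r)%:R%R else 0%R)).
  apply: nmxP => p q _ _.
  case Ab: (Abool w a p q); last by do 2?case: ifP.
  have [h1 h2] : VVf x w p == Some (s a) /\ VVf x w q == Some (t a).
    case/orP: Ab => /andP[/eqP e /eqP h]; have [v1 v2] := walk_verts hw h.
      by subst q; rewrite v1 v2.
    by subst p; rewrite v1 v2.
  by rewrite h1 h2.
- move=> a b Rab; rewrite !actE mul_nmx -nmx0; apply: nmxP => p r _ _.
  apply: big1 => q _; rewrite -natrM mulnb.
  case: andP => [[h1 h2]|_] //.
  by case: (Abool_comp N1 N2 Rab h1 h2).
Qed.

Lemma hom_emb x1 w1 x2 w2 o : o + (size w1).+1 <= (size w2).+1 ->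
  (forall i, i < (size w1).+1 -> VVf x2 w2 (i + o) = VVf x1 w1 i) ->
  (forall a i j, i < (size w1).+1 -> j < (size w2).+1 ->
     Abool w2 a (i + o) j = [&& o <= j, j - o < (size w1).+1 & Abool w1 a i (j - o)]) ->
  @is_hom k V F (SM (x1, w1)) (SM (x2, w2)) (emb o).
Proof.
move=> ho HV HA; split.
- move=> y; rewrite !idemE mul_emb_r mul_emb_l //; apply: nmxP => i j; rewrite /= => hi hj.
  rewrite HV //.
  have -> : (i + o == j) && (VVf x1 w1 i == Some y) =
     ((o <= j) && (j - o < (size w1).+1)) && ((i == j - o) && (VVf x1 w1 i == Some y)).
    rewrite eq_sym eq_add_shift; case: (o <= j) => //=.
    case: eqP => [e|ne]; first by rewrite -e in hi *; rewrite hi eqxx.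
    by case: (i =P j - o) => [e|_]; [case: ne; rewrite e | rewrite /= andbF].
  by case: ifP.
- move=> a; rewrite !actE mul_emb_r mul_emb_l //; apply: nmxP => i j; rewrite /= => hi hj.
  by rewrite HA //; case: (o <= j); case: (j - o < _).
Qed.

Lemma hom_prj x1 w1 x2 w2 o : o + (size w2).+1 <= (size w1).+1 ->
  (forall j, j < (size w2).+1 -> VVf x1 w1 (j + o) = VVf x2 w2 j) ->
  (forall a p j, p < (size w1).+1 -> j < (size w2).+1 ->
     Abool w1 a p (j + o) = [&& o <= p, p - o < (size w2).+1 & Abool w2 a (p - o) j]) ->
  @is_hom k V F (SM (x1, w1)) (SM (x2, w2)) (prj o).
Proof.
move=> ho HV HA; split.
- move=> y; rewrite !idemE mul_prj_r // mul_prj_l; apply: nmxP => p j; rewrite /= => hp hj.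
  have -> : (p == j + o) && (VVf x1 w1 p == Some y) =
     ((o <= p) && (p - o < (size w2).+1)) && ((p - o == j) && (VVf x2 w2 (p - o) == Some y)).
    rewrite eq_add_shift; case: (leqP o p) => hop //=.
    case: eqP => [e|ne]; last by rewrite andbF.
    have hpe : p = j + o by lia.
    by rewrite e {1}hpe HV // hj.
  by case: ifP.
- move=> a; rewrite !actE mul_prj_r // mul_prj_l; apply: nmxP => p j; rewrite /= => hp hj.
  by rewrite HA //; case: (o <= p); case: (p - o < _).
Qed.

End SM.

Section CAT.
Variables (k : fieldType) (V F : finType) (s t : F -> V).
Variables (x : V) (U W : seq (F * bool)) (L : F * bool).

Notation SM := (string_module k s t).
Notation w := (U ++ L :: W).
Notation LL := (@LLf F).
Notation VV := (VVf s t).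

Lemma LLf_cat_l p : p < size U -> LL w p = LL U p.
Proof. by move=> h; rewrite /LLf map_cat nth_cat size_map h. Qed.

Lemma LLf_cat_m : LL w (size U) = Some L.
Proof. by rewrite /LLf map_cat nth_cat size_map ltnn subnn. Qed.

Lemma LLf_cat_r i : LL w (i + (size U).+1) = LL W i.
Proof.
rewrite /LLf map_cat nth_cat size_map ifF; last by apply/negbTE; rewrite -leqNgt; lia.
by have -> : i + (size U).+1 - size U = i.+1 by lia.
Qed.

Lemma verts_cat : string_verts s t x w = string_verts s t x U ++ string_verts s t (ltgt s t L) W.
Proof. by rewrite /string_verts map_cat. Qed.

Lemma VVf_cat_l p : p < (size U).+1 -> VV x w p = VV x U p.
Proof. by move=> h; rewrite /VVf verts_cat map_cat nth_cat size_map /= size_map h. Qed.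

Lemma VVf_cat_r i : VV x w (i + (size U).+1) = VV (ltgt s t L) W i.
Proof.
rewrite /VVf verts_cat map_cat nth_cat size_map /= size_map ifF; last by apply/negbTE; rewrite -leqNgt; lia.
by rewrite addnK.
Qed.

Lemma size_w : size w = size U + (size W).+1.
Proof. by rewrite size_cat. Qed.

Lemma hom_embV : L.2 = true ->
  @is_hom k V F (SM (ltgt s t L, W)) (SM (x, w)) (emb (size U).+1).
Proof.
move=> hL; apply: hom_emb.
- by rewrite size_w; lia.
- by move=> i _; rewrite VVf_cat_r.
move=> a i j hi hj; rewrite /Abool LLf_cat_r.
case: (leqP (size U).+1 j) => hj'.
  have [k' ej] : exists k', j = k' + (size U).+1 by exists (j - (size U).+1); lia.
  subst j; have hk : k' < (size W).+1 by move: hj; rewrite size_w; lia.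
  by rewrite addnK hk /= LLf_cat_r -!addSn !eqn_add2r.
rewrite /=; apply/negbTE/negP; case/orP => /andP[/eqP e h]; first lia.
have ej : j = size U by lia.
by move: h; rewrite ej LLf_cat_m => /eqP [eL]; rewrite eL in hL.
Qed.

Lemma hom_prjU : L.2 = true ->
  @is_hom k V F (SM (x, w)) (SM (x, U)) (prj 0).
Proof.
move=> hL; apply: hom_prj.
- by rewrite size_w; lia.
- by move=> j hj; rewrite addn0 VVf_cat_l.
move=> a p j hp hj; rewrite /Abool addn0 subn0 /=.
case: (ltngtP p (size U)) => hpm.
- rewrite (_ : p < (size U).+1); last lia.
  rewrite LLf_cat_l //=.
  case: (p =P j.+1) => e /=; last by [].
  by rewrite [LL w j]LLf_cat_l //; lia.
- rewrite (_ : p < (size U).+1 = false); last lia.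
  apply/negbTE/negP; case/orP => /andP[/eqP e h]; first lia.
  have ej : j = size U by lia.
  by move: h; rewrite ej LLf_cat_m => /eqP [eL]; rewrite eL in hL.
- subst p; rewrite ltnSn /= (_ : j == (size U).+1 = false); last lia.
  case: (size U =P j.+1) => e /=; last by [].
  by rewrite [LL w j]LLf_cat_l //; lia.
Qed.

Lemma hom_embU : L.2 = false ->
  @is_hom k V F (SM (x, U)) (SM (x, w)) (emb 0).
Proof.
move=> hL; apply: hom_emb.
- by rewrite size_w; lia.
- by move=> i hi; rewrite addn0 VVf_cat_l.
move=> a i j hi hj; rewrite /Abool addn0 subn0 /=.
case: (ltngtP i (size U)) => him.
- rewrite LLf_cat_l //.
  case: (j =P i.+1) => e1 /=.
    rewrite (_ : j < (size U).+1); last lia.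
    by rewrite (_ : i == j.+1 = false) //; lia.
  case: (i =P j.+1) => e2 /=; last by rewrite andbF.
  by rewrite (_ : j < (size U).+1) ?LLf_cat_l //; lia.
- lia.
- subst i; rewrite LLf_cat_m.
  rewrite (_ : Some L == Some (a, true) = false); last first.
    by apply/negbTE/eqP => [[eL]]; rewrite eL in hL.
  rewrite (_ : LL U (size U) == Some (a, true) = false); last first.
    by rewrite /LLf nth_default // size_map.
  rewrite !andbF /=.
  case: (size U =P j.+1) => e2 /=; last by rewrite andbF.
  by rewrite (_ : j < (size U).+1) ?LLf_cat_l //; lia.
Qed.

Lemma hom_prjV : L.2 = false ->
  @is_hom k V F (SM (x, w)) (SM (ltgt s t L, W)) (prj (size U).+1).
Proof.
move=> hL; apply: hom_prj.
- by rewrite size_w; lia.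
- by move=> j _; rewrite VVf_cat_r.
move=> a p j hp hj; rewrite /Abool LLf_cat_r.
case: (leqP (size U).+1 p) => hp'.
  have [k' ej] : exists k', p = k' + (size U).+1 by exists (p - (size U).+1); lia.
  subst p; have hk : k' < (size W).+1 by move: hp; rewrite size_w; lia.
  by rewrite addnK hk /= LLf_cat_r -!addSn !eqn_add2r.
rewrite /=; apply/negbTE/negP; case/orP => /andP[/eqP e h]; last lia.
have ep : p = size U by lia.
by move: h; rewrite ep LLf_cat_m => /eqP [eL]; rewrite eL in hL.
Qed.

End CAT.

Lemma ker_lemma (k : fieldType) m n p (f : 'M[k]_(m, n)) (g : 'M[k]_(n, p)) :
  row_free f -> row_full g -> (f *m g = 0)%R -> m + p = n -> (f == kermx g)%MS.
Proof.
move=> hf hg fg e.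
have sub : (f <= kermx g)%MS by rewrite sub_kermx fg.
rewrite -(mxrank_leqif_eq sub).2 mxrank_ker.
move: hf hg; rewrite /row_free /row_full => /eqP -> /eqP ->.
apply/eqP; lia.
Qed.

Section Main.
Variables (k : fieldType) (V E : finType) (src tgt : E -> V) (rel : E -> E -> bool).
Notation psrc := (@pi_src V E src tgt).
Notation ptgt := (@pi_tgt V E src tgt).
Notation prel := (@pi_rel E rel).
Notation SM := (string_module k psrc ptgt).

Lemma zero_module : is_module psrc ptgt prel (zero_mod k V (E + E)%type).
Proof.
split => //=.
- by move=> *; apply/matrixP => [[]].
- by move=> *; apply/matrixP => [[]].
- by apply/matrixP => [[]].
- by move=> *; apply/matrixP => [[]].
- by move=> *; apply/matrixP => [[]].
Qed.

Lemma shadow_SM w : is_string src tgt rel (specialize_word w) ->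
  shadow_class src tgt rel (SM w).
Proof.
move=> H; exists [:: w], (zero_mod k V (E + E)%type); split.
- by move=> w0; rewrite mem_seq1 => /eqP ->; split => //; apply: pi_string.
- exact: zero_module.
exists 1%:M%R; split.
- by split => [x|a]; rewrite mul1mx mulmx1.
- by rewrite row_free_unit unitmx1.
- by rewrite row_full_unit unitmx1.
Qed.

Lemma modS w D : is_string src tgt rel w -> size w.2 <= size D ->
  is_module psrc ptgt prel (SM (str w D)).
Proof.
move=> Hw hs; case e: (str w D) => [x s]; apply: sm_module; rewrite -e.
by apply: pi_string; rewrite spec_str.
Qed.

Lemma str_fst (w : V * seq (E * bool)) D : str w D = (w.1, (str w D).2).
Proof. by case: w. Qed.

End Main.

Theorem lemma6p8 (k : fieldType) (V E : finType) (src tgt : E -> V)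
  (rel : E -> E -> bool) :
  brick_gentle k src tgt rel ->
  forall Tt : qmod k V (E + E)%type -> Prop,
    torshad_elt src tgt rel Tt ->
    biclosed src tgt rel (Bset src tgt rel Tt).
Proof.
move=> _ Tt [T [[HTm HTq HTe] HTt]].
have TtI : forall w D, is_string src tgt rel w -> size D = size w.2 ->
    T (string_module k (pi_src src tgt) (pi_tgt src tgt) (str w D)) ->
    Bset src tgt rel Tt w.
  move=> w D Hw hD TD; split => //; exists D; split => //; apply/HTt; split => //.
  by apply: shadow_SM; rewrite spec_str // hD.
split.
- move=> u v l [Hu [D1 [hD1 Tu]]] [Hv [D2 [hD2 Tv]]] hl1 hl2 Hw.
  have hD : size (D1 ++ true :: D2) = size (concat u l v).2.
    by rewrite /concat /= !size_cat /= hD1 hD2.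
  apply: (TtI _ _ Hw hD).
  have mY := modS k Hw (eq_leq (esym hD)).
  move: mY; rewrite str_concat // => mY.
  set U := (str u D1).2; set W := (str v D2).2; set L := str_letter l true.
  have eu : str u D1 = (u.1, U) by rewrite [LHS]str_fst.
  have ev : str v D2 = (ltgt (pi_src src tgt) (pi_tgt src tgt) L, W).
    by rewrite [LHS]str_fst ltgt_str hl2.
  have mX := modS k Hv (eq_leq (esym hD2)); rewrite ev in mX.
  have mZ := modS k Hu (eq_leq (esym hD1)); rewrite eu in mZ.
  case/HTt: Tu => Tu _; rewrite eu in Tu.
  case/HTt: Tv => Tv _; rewrite ev in Tv.
  have hsz : size (U ++ L :: W) = size U + (size W).+1 by rewrite size_cat.
  have hb1 : (size U).+1 + (size W).+1 <= (size (U ++ L :: W)).+1 by rewrite hsz; lia.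
  have hb0 : 0 + (size U).+1 <= (size (U ++ L :: W)).+1 by rewrite hsz; lia.
  have hsum : (size W).+1 + (size U).+1 = (size (U ++ L :: W)).+1 by rewrite hsz; lia.
  apply: (HTe _ _ _ (emb (size U).+1) (prj 0) mX mY mZ Tv Tu).
  + by apply: hom_embV.
  + by apply: hom_prjU.
  + by apply/row_freeP; exists (prj (size U).+1); apply: emb_prj hb1.
  + by apply/row_fullP; exists (emb 0); apply: emb_prj hb0.
  + apply: ker_lemma.
    * by apply/row_freeP; exists (prj (size U).+1); apply: emb_prj hb1.
    * by apply/row_fullP; exists (emb 0); apply: emb_prj hb0.
    * rewrite /prj mul_emb_l //.
      rewrite -nmx0; apply: nmxP => i j _; rewrite /= => hj.
      by rewrite (_ : (i + (size U).+1 == j + 0) = false) //; apply/negbTE/eqP; lia.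
    * exact: hsum.
- move=> u v l [Hu nBu] [Hv nBv] hl1 hl2 Hw; split => // [[_ [D [hD TD]]]].
  set m := size u.2.
  have hDs : size D = m + (size v.2).+1 by rewrite hD /concat size_cat.
  have eD : D = take m D ++ nth false D m :: drop m.+1 D.
    by rewrite -drop_nth ?cat_take_drop // hDs; lia.
  have hD1 : size (take m D) = size u.2 by rewrite size_takel // hDs; lia.
  have hD2 : size (drop m.+1 D) = size v.2 by rewrite size_drop hDs; lia.
  have mY := modS k Hw (eq_leq (esym hD)).
  move: mY TD; rewrite eD str_concat // => mY /HTt [TD _].
  set U := (str u (take m D)).2; set W := (str v (drop m.+1 D)).2.
  set L := str_letter l (nth false D m).
  have eu : str u (take m D) = (u.1, U) by rewrite [LHS]str_fst.
  have ev : str v (drop m.+1 D) = (ltgt (pi_src src tgt) (pi_tgt src tgt) L, W).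
    by rewrite [LHS]str_fst ltgt_str hl2.
  have hsz : size (U ++ L :: W) = size U + (size W).+1 by rewrite size_cat.
  have hb1 : (size U).+1 + (size W).+1 <= (size (U ++ L :: W)).+1 by rewrite hsz; lia.
  have hb0 : 0 + (size U).+1 <= (size (U ++ L :: W)).+1 by rewrite hsz; lia.
  have hsum : (size W).+1 + (size U).+1 = (size (U ++ L :: W)).+1 by rewrite hsz; lia.
  case c : (nth false D m).
  + apply: nBu; apply: (TtI _ _ Hu hD1); rewrite eu.
    have mZ := modS k Hu (eq_leq (esym hD1)); rewrite eu in mZ.
    apply: (HTq _ _ (prj 0) mY mZ TD).
    * by apply: hom_prjU; rewrite /L c.
    * by apply/row_fullP; exists (emb 0); apply: emb_prj hb0.
  + apply: nBv; apply: (TtI _ _ Hv hD2); rewrite ev.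
    have mX := modS k Hv (eq_leq (esym hD2)); rewrite ev in mX.
    apply: (HTq _ _ (prj (size U).+1) mY mX TD).
    * by apply: hom_prjV; rewrite /L c.
    * by apply/row_fullP; exists (emb (size U).+1); apply: emb_prj hb1.
Qed.
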